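(* Let $y_1\neq 0$ be a real number and let $Y,Y'\in\mathfrak o(V,K)$, written in block form $$Y=\begin{pmatrix}a&-\widetilde e^{\,*}&0\\ \widetilde b&\widetilde Y&\widetilde e\\0&-\widetilde b^{\,*}&-a\end{pmatrix},\qquad Y'=\begin{pmatrix}a'&-(\widetilde e')^{*}&0\\ \widetilde b'&\widetilde Y'&\widetilde e'\\0&-(\widetilde b')^{*}&-a'\end{pmatrix}$$ with $a,a'\in\mathbb R$, $\widetilde b,\widetilde e,\widetilde b',\widetilde e'\in\mathbb R^n$ and $\widetilde Y,\widetilde Y'\in\mathfrak o(\widetilde V,\widetilde K)$. Then the special tuples $(Y,y_1e_1)$ and $(Y',y_1e_1)$ are equivalent if and only if there exists $\widetilde P\in O(\widetilde V,\widetilde K)$ with $\widetilde Y'=\widetilde P\,\widetilde Y\,\widetilde P^{-1}$.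
   Context: Let $n\ge 0$ be an integer and let $\widetilde K$ be a real symmetric $n\times n$ matrix with $\widetilde K^2=I_n$; let $\widetilde V=\mathbb R^n$, $\widetilde x^{\,*}=\widetilde x^{\,T}\widetilde K$, $O(\widetilde V,\widetilde K)=\{\widetilde P:\widetilde P^T\widetilde K\widetilde P=\widetilde K\}$, $\mathfrak o(\widetilde V,\widetilde K)=\{\widetilde X:\widetilde X^T\widetilde K+\widetilde K\widetilde X=0\}$. Let $V=\mathbb R^{n+2}$ with standard basis $e_1,\dots,e_{n+2}$ (the middle $n$ coordinates identified with $\widetilde V$), and let $K=\begin{pmatrix}0&0&1\\0&\widetilde K&0\\1&0&0\end{pmatrix}$ (block sizes $1,n,1$). For $x,w\in V$ write $x^*=x^TK$ and $L_{u,w}=u\,w^*-w\,u^*$. Let $O(V,K)=\{P:P^TKP=K\}$, $\mathfrak o(V,K)=\{X:X^TK+KX=0\}$ (every element of which has the block form displayed in the claim), $O(V,K)_{e_{n+2}}=\{P\in O(V,K):Pe_{n+2}=e_{n+2}\}$. A special tuple is a pair $(Y,y)$ with $Y\in\mathfrak o(V,K)$, $y\in V$. Two special tuples $(Y,y)$ and $(Y',y')$ are equivalent if there exist $P\in O(V,K)_{e_{n+2}}$, vectors $v,p\in V$ with $p^*(e_{n+2})=0$, and $v_0\in\mathbb R$ such that $Y'+L_{v,e_{n+2}}=P(Y+L_{p,y})P^{-1}$ and $y'=Py+v_0e_{n+2}$. *)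

(* Defs.v *)
From HB Require Import structures.
From mathcomp Require Import all_boot all_order all_algebra.
From mathcomp Require Export reals.
Set Implicit Arguments. Unset Strict Implicit. Unset Printing Implicit Defensive.
Import Order.TTheory GRing.Theory Num.Theory.
Local Open Scope ring_scope.

Section Defs.
Variables (R : realType) (n : nat).

Definition Vvec := 'cV[R]_(1 + n + 1).
Definition Vmat := 'M[R]_(1 + n + 1).

(* K = [[0,0,1],[0,Kt,0],[1,0,0]] *)
Definition bigK (Kt : 'M[R]_n) : Vmat :=
  block_mx (block_mx (0 : 'M[R]_1) (0 : 'M[R]_(1, n)) (0 : 'M[R]_(n, 1)) Kt)
           (col_mx (1%:M : 'M[R]_1) (0 : 'M[R]_(n, 1)))
           (row_mx (1%:M : 'M[R]_1) (0 : 'M[R]_(1, n)))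
           (0 : 'M[R]_1).

Definition e_first : Vvec := col_mx (col_mx (1%:M : 'cV[R]_1) (0 : 'cV[R]_n)) (0 : 'cV[R]_1).
Definition e_last : Vvec := col_mx (0 : 'cV[R]_(1 + n)) (1%:M : 'cV[R]_1).

Definition vstar (K : Vmat) (x : Vvec) : 'rV[R]_(1 + n + 1) := x^T *m K.

Definition Lop (K : Vmat) (u w : Vvec) : Vmat := u *m vstar K w - w *m vstar K u.

Definition blockY (Kt : 'M[R]_n) (a : R) (b e : 'cV[R]_n) (Yt : 'M[R]_n) : Vmat :=
  block_mx (block_mx (a%:M : 'M[R]_1) (- (e^T *m Kt)) b Yt)
           (col_mx (0 : 'M[R]_1) e)
           (row_mx (0 : 'M[R]_1) (- (b^T *m Kt)))
           ((- a)%:M : 'M[R]_1).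

Definition in_O (m : nat) (K P : 'M[R]_m) : Prop := P^T *m K *m P = K.
Definition in_o (m : nat) (K X : 'M[R]_m) : Prop := X^T *m K + K *m X = 0.

Definition special_equiv (Kt : 'M[R]_n) (Y : Vmat) (y : Vvec) (Y' : Vmat) (y' : Vvec)
  : Prop :=
  let K := bigK Kt in
  exists (P : Vmat) (v p : Vvec) (v0 : R),
    [/\ in_O K P, P *m e_last = e_last,
        vstar K p *m e_last = 0,
        Y' + Lop K v e_last = P *m (Y + Lop K p y) *m invmx P
      & y' = P *m y + v0 *: e_last].

End Defs.

(* Main.v *)
Require Import Defs.
From mathcomp Require Import all_boot all_order all_algebra reals.
Import GRing.Theory Num.Theory.
Local Open Scope ring_scope.

Definition mk3 (R : realType) (m1 m2 m3 : nat)
  (A11 : 'M[R]_(m1,m1)) (A12 : 'M[R]_(m1,m2)) (A13 : 'M[R]_(m1,m3))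
  (A21 : 'M[R]_(m2,m1)) (A22 : 'M[R]_(m2,m2)) (A23 : 'M[R]_(m2,m3))
  (A31 : 'M[R]_(m3,m1)) (A32 : 'M[R]_(m3,m2)) (A33 : 'M[R]_(m3,m3))
  : 'M[R]_(m1+m2+m3) :=
  block_mx (block_mx A11 A12 A21 A22) (col_mx A13 A23) (row_mx A31 A32) A33.

Definition col3 (R : realType) (m1 m2 m3 p : nat)
  (x1 : 'M[R]_(m1,p)) (x2 : 'M[R]_(m2,p)) (x3 : 'M[R]_(m3,p)) : 'M[R]_(m1+m2+m3,p) :=
  col_mx (col_mx x1 x2) x3.

Definition row3 (R : realType) (m1 m2 m3 p : nat)
  (x1 : 'M[R]_(p,m1)) (x2 : 'M[R]_(p,m2)) (x3 : 'M[R]_(p,m3)) : 'M[R]_(p,m1+m2+m3) :=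
  row_mx (row_mx x1 x2) x3.

Arguments mk3 {R m1 m2 m3}.
Arguments col3 {R m1 m2 m3 p}.
Arguments row3 {R m1 m2 m3 p}.

Ltac blk := rewrite /mk3 /col3 /row3 ?mulmx_block ?mul_block_col ?mul_row_block
  ?mul_col_row ?mul_row_col ?mul_mx_row ?mul_col_mx ?add_block_mx ?add_col_mx
  ?add_row_mx ?opp_block_mx ?opp_col_mx ?opp_row_mx ?scale_block_mx ?scale_col_mx
  ?scale_row_mx ?tr_block_mx ?tr_col_mx ?tr_row_mx ?addrA.

Lemma mul33 (R : realType) m1 m2 m3 (A11 : 'M[R]_(m1,m1)) (A12 : 'M[R]_(m1,m2)) (A13 : 'M[R]_(m1,m3))
  (A21 : 'M[R]_(m2,m1)) (A22 : 'M[R]_(m2,m2)) (A23 : 'M[R]_(m2,m3))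
  (A31 : 'M[R]_(m3,m1)) (A32 : 'M[R]_(m3,m2)) (A33 : 'M[R]_(m3,m3))
  B11 B12 B13 B21 B22 B23 B31 B32 B33 :
  mk3 A11 A12 A13 A21 A22 A23 A31 A32 A33 *m mk3 B11 B12 B13 B21 B22 B23 B31 B32 B33 =
  mk3 (A11 *m B11 + A12 *m B21 + A13 *m B31) (A11 *m B12 + A12 *m B22 + A13 *m B32)
      (A11 *m B13 + A12 *m B23 + A13 *m B33)
      (A21 *m B11 + A22 *m B21 + A23 *m B31) (A21 *m B12 + A22 *m B22 + A23 *m B32)
      (A21 *m B13 + A22 *m B23 + A23 *m B33)
      (A31 *m B11 + A32 *m B21 + A33 *m B31) (A31 *m B12 + A32 *m B22 + A33 *m B32)
      (A31 *m B13 + A32 *m B23 + A33 *m B33).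
Proof. by blk. Qed.

Lemma mul3c (R : realType) m1 m2 m3 p (A11 : 'M[R]_(m1,m1)) (A12 : 'M[R]_(m1,m2)) (A13 : 'M[R]_(m1,m3))
  (A21 : 'M[R]_(m2,m1)) (A22 : 'M[R]_(m2,m2)) (A23 : 'M[R]_(m2,m3))
  (A31 : 'M[R]_(m3,m1)) (A32 : 'M[R]_(m3,m2)) (A33 : 'M[R]_(m3,m3))
  (x1 : 'M[R]_(m1,p)) x2 x3 :
  mk3 A11 A12 A13 A21 A22 A23 A31 A32 A33 *m col3 x1 x2 x3 =
  col3 (A11 *m x1 + A12 *m x2 + A13 *m x3) (A21 *m x1 + A22 *m x2 + A23 *m x3)
       (A31 *m x1 + A32 *m x2 + A33 *m x3).
Proof. by blk. Qed.

Lemma mulr3 (R : realType) m1 m2 m3 p (A11 : 'M[R]_(m1,m1)) (A12 : 'M[R]_(m1,m2)) (A13 : 'M[R]_(m1,m3))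
  (A21 : 'M[R]_(m2,m1)) (A22 : 'M[R]_(m2,m2)) (A23 : 'M[R]_(m2,m3))
  (A31 : 'M[R]_(m3,m1)) (A32 : 'M[R]_(m3,m2)) (A33 : 'M[R]_(m3,m3))
  (x1 : 'M[R]_(p,m1)) x2 x3 :
  row3 x1 x2 x3 *m mk3 A11 A12 A13 A21 A22 A23 A31 A32 A33 =
  row3 (x1 *m A11 + x2 *m A21 + x3 *m A31) (x1 *m A12 + x2 *m A22 + x3 *m A32)
       (x1 *m A13 + x2 *m A23 + x3 *m A33).
Proof. by blk. Qed.

Lemma mulcr (R : realType) m1 m2 m3 p (x1 : 'M[R]_(m1,p)) (x2 : 'M[R]_(m2,p)) (x3 : 'M[R]_(m3,p))
  (y1 : 'M[R]_(p,m1)) y2 y3 :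
  col3 x1 x2 x3 *m row3 y1 y2 y3 =
  mk3 (x1 *m y1) (x1 *m y2) (x1 *m y3) (x2 *m y1) (x2 *m y2) (x2 *m y3)
      (x3 *m y1) (x3 *m y2) (x3 *m y3).
Proof. by blk. Qed.

Lemma mulrc (R : realType) m1 m2 m3 p q (x1 : 'M[R]_(p,m1)) (x2 : 'M[R]_(p,m2)) (x3 : 'M[R]_(p,m3))
  (y1 : 'M[R]_(m1,q)) y2 y3 :
  row3 x1 x2 x3 *m col3 y1 y2 y3 = x1 *m y1 + x2 *m y2 + x3 *m y3.
Proof. by blk. Qed.

Lemma add33 (R : realType) m1 m2 m3 (A11 : 'M[R]_(m1,m1)) (A12 : 'M[R]_(m1,m2)) (A13 : 'M[R]_(m1,m3))
  (A21 : 'M[R]_(m2,m1)) (A22 : 'M[R]_(m2,m2)) (A23 : 'M[R]_(m2,m3))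
  (A31 : 'M[R]_(m3,m1)) (A32 : 'M[R]_(m3,m2)) (A33 : 'M[R]_(m3,m3))
  B11 B12 B13 B21 B22 B23 B31 B32 B33 :
  mk3 A11 A12 A13 A21 A22 A23 A31 A32 A33 + mk3 B11 B12 B13 B21 B22 B23 B31 B32 B33 =
  mk3 (A11 + B11) (A12 + B12) (A13 + B13) (A21 + B21) (A22 + B22) (A23 + B23)
      (A31 + B31) (A32 + B32) (A33 + B33).
Proof. by blk. Qed.

Lemma opp33 (R : realType) m1 m2 m3 (A11 : 'M[R]_(m1,m1)) (A12 : 'M[R]_(m1,m2)) (A13 : 'M[R]_(m1,m3))
  (A21 : 'M[R]_(m2,m1)) (A22 : 'M[R]_(m2,m2)) (A23 : 'M[R]_(m2,m3))
  (A31 : 'M[R]_(m3,m1)) (A32 : 'M[R]_(m3,m2)) (A33 : 'M[R]_(m3,m3)) :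
  - mk3 A11 A12 A13 A21 A22 A23 A31 A32 A33 =
  mk3 (- A11) (- A12) (- A13) (- A21) (- A22) (- A23) (- A31) (- A32) (- A33).
Proof. by blk. Qed.

Lemma tr33 (R : realType) m1 m2 m3 (A11 : 'M[R]_(m1,m1)) (A12 : 'M[R]_(m1,m2)) (A13 : 'M[R]_(m1,m3))
  (A21 : 'M[R]_(m2,m1)) (A22 : 'M[R]_(m2,m2)) (A23 : 'M[R]_(m2,m3))
  (A31 : 'M[R]_(m3,m1)) (A32 : 'M[R]_(m3,m2)) (A33 : 'M[R]_(m3,m3)) :
  (mk3 A11 A12 A13 A21 A22 A23 A31 A32 A33)^T =
  mk3 A11^T A21^T A31^T A12^T A22^T A32^T A13^T A23^T A33^T.
Proof. by blk. Qed.

Lemma add3c (R : realType) m1 m2 m3 p (x1 : 'M[R]_(m1,p)) (x2 : 'M[R]_(m2,p)) (x3 : 'M[R]_(m3,p)) y1 y2 y3 :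
  col3 x1 x2 x3 + col3 y1 y2 y3 = col3 (x1 + y1) (x2 + y2) (x3 + y3).
Proof. by blk. Qed.

Lemma scale3c (R : realType) m1 m2 m3 p (c : R) (x1 : 'M[R]_(m1,p)) (x2 : 'M[R]_(m2,p)) (x3 : 'M[R]_(m3,p)) :
  c *: col3 x1 x2 x3 = col3 (c *: x1) (c *: x2) (c *: x3).
Proof. by blk. Qed.

Lemma tr3c (R : realType) m1 m2 m3 p (x1 : 'M[R]_(m1,p)) (x2 : 'M[R]_(m2,p)) (x3 : 'M[R]_(m3,p)) :
  (col3 x1 x2 x3)^T = row3 x1^T x2^T x3^T.
Proof. by blk. Qed.

Lemma eq33 (R : realType) m1 m2 m3 (A11 : 'M[R]_(m1,m1)) (A12 : 'M[R]_(m1,m2)) (A13 : 'M[R]_(m1,m3))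
  (A21 : 'M[R]_(m2,m1)) (A22 : 'M[R]_(m2,m2)) (A23 : 'M[R]_(m2,m3))
  (A31 : 'M[R]_(m3,m1)) (A32 : 'M[R]_(m3,m2)) (A33 : 'M[R]_(m3,m3))
  B11 B12 B13 B21 B22 B23 B31 B32 B33 :
  mk3 A11 A12 A13 A21 A22 A23 A31 A32 A33 = mk3 B11 B12 B13 B21 B22 B23 B31 B32 B33 ->
  [/\ A11 = B11, A12 = B12, A13 = B13, A21 = B21 &
   [/\ A22 = B22, A23 = B23, A31 = B31, A32 = B32 & A33 = B33]].
Proof.
rewrite /mk3 => /eq_block_mx [/eq_block_mx [-> -> -> ->] /eq_col_mx [-> ->] /eq_row_mx [-> ->] ->].
by [].
Qed.

Lemma eq3c (R : realType) m1 m2 m3 p (x1 : 'M[R]_(m1,p)) (x2 : 'M[R]_(m2,p)) (x3 : 'M[R]_(m3,p)) y1 y2 y3 :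
  col3 x1 x2 x3 = col3 y1 y2 y3 -> [/\ x1 = y1, x2 = y2 & x3 = y3].
Proof. by rewrite /col3 => /eq_col_mx [/eq_col_mx [-> ->] ->]. Qed.

Lemma dec33 (R : realType) m1 m2 m3 (P : 'M[R]_(m1+m2+m3)) :
  exists A11 A12 A13 A21 A22 A23 A31 A32 A33, P = @mk3 R m1 m2 m3 A11 A12 A13 A21 A22 A23 A31 A32 A33.
Proof.
rewrite -(submxK P) -(submxK (ulsubmx P)) -(vsubmxK (ursubmx P)) -(hsubmxK (dlsubmx P)).
by do 9 eexists.
Qed.

Lemma dec3c (R : realType) m1 m2 m3 p (x : 'M[R]_(m1+m2+m3, p)) :
  exists x1 x2 x3, x = @col3 R m1 m2 m3 p x1 x2 x3.
Proof. rewrite -(vsubmxK x) -(vsubmxK (usubmx x)). by do 3 eexists. Qed.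

Lemma one33 (R : realType) m1 m2 m3 :
  (1%:M : 'M[R]_(m1+m2+m3)) = mk3 1%:M 0 0 0 1%:M 0 0 0 1%:M.
Proof. by rewrite /mk3 !scalar_mx_block col_mx0 row_mx0. Qed.

Lemma bigKE (R : realType) n (Kt : 'M[R]_n) :
  bigK Kt = mk3 0 0 1%:M 0 Kt 0 1%:M 0 0.
Proof. by []. Qed.
Lemma blockYE (R : realType) n (Kt : 'M[R]_n) a b e Yt :
  blockY Kt a b e Yt = mk3 a%:M (- (e^T *m Kt)) 0 b Yt e 0 (- (b^T *m Kt)) (- a)%:M.
Proof. by []. Qed.
Lemma e_firstE (R : realType) n : e_first R n = col3 1%:M 0 0.
Proof. by []. Qed.
Lemma e_lastE (R : realType) n : e_last R n = col3 0 0 1%:M.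
Proof. by rewrite /e_last /col3 col_mx0. Qed.

Ltac simp := rewrite ?(mul0mx, mulmx0, mul1mx, mulmx1, add0r, addr0, oppr0, subr0, sub0r,
   trmx0, trmx1, scaler0, scale0r, tr_scalar_mx, opprK).

Lemma KK (R : realType) n (Kt : 'M[R]_n) : Kt *m Kt = 1%:M ->
  bigK Kt *m bigK Kt = 1%:M.
Proof. move=> h; rewrite bigKE mul33 one33; simp; by rewrite h. Qed.

Lemma fwd (R : realType) (n : nat) (Kt : 'M[R]_n)
    (hKsym : Kt^T = Kt) (hKsq : Kt *m Kt = 1%:M)
    (y1 : R) (hy1 : y1 != 0)
    (a a' : R) (b e b' e' : 'cV[R]_n) (Yt Yt' : 'M[R]_n) :
  special_equiv Kt (blockY Kt a b e Yt) (y1 *: e_first R n)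
                   (blockY Kt a' b' e' Yt') (y1 *: e_first R n)
  -> exists Pt : 'M[R]_n, in_O Kt Pt /\ Yt' = Pt *m Yt *m invmx Pt.
Proof.
case=> P [v [p [v0 [hO hPe hp hEq hy]]]].
have Pu : P \in unitmx.
  have : (bigK Kt *m P^T *m bigK Kt) *m P = 1%:M.
    by rewrite -!mulmxA (mulmxA P^T) hO KK.
  by case/mulmx1_unit.
have hEq' : (blockY Kt a' b' e' Yt' + Lop (bigK Kt) v (e_last R n)) *m P =
   P *m (blockY Kt a b e Yt + Lop (bigK Kt) p (y1 *: e_first R n)).
  by rewrite hEq mulmxKV.
move: hO hPe hy hEq'; rewrite /in_O /Lop /vstar.
have [A11 [A12 [A13 [A21 [A22 [A23 [A31 [A32 [A33 ->]]]]]]]]] := @dec33 _ 1 n 1 P.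
have [v1 [v2 [v3 ->]]] := @dec3c _ 1 n 1 1 v.
have [p1 [p2 [p3 ->]]] := @dec3c _ 1 n 1 1 p.
rewrite bigKE blockYE e_firstE e_lastE.
rewrite !(tr33, tr3c, scale3c, mul33, mul3c, mulr3, mulcr, mulrc, add33, add3c, opp33).
simp.
move=> hO /eq3c [h13 h23 h33] /eq3c [hy1' hy2 _].
have eA11 : A11 = 1%:M.
  apply: (@scalerI _ _ y1) => //; by rewrite hy1' -scalemxAr mulmx1.
have eA21 : A21 = 0.
  have : y1 *: A21 = 0 by rewrite hy2 -scalemxAr mulmx1.
  by move/eqP; rewrite scaler_eq0 (negbTE hy1) /= => /eqP.
subst A11 A21 A13 A23 A33.
move: hO; simp => hO.
case/eq33: hO => _ e12 _ _ [e22 _ _ e32 _].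
subst A12; move: e12 e22; simp => e12; subst A32; simp => e22.
case/eq33 => _ _ _ _ [h22 _ _ _ _].
have A22u : A22 \in unitmx.
  have : (Kt *m A22^T *m Kt) *m A22 = 1%:M by rewrite -!mulmxA (mulmxA A22^T) e22 hKsq.
  by case/mulmx1_unit.
exists A22; split; first by [].
by rewrite -h22 mulmxK.
Qed.

Lemma bwd (R : realType) (n : nat) (Kt : 'M[R]_n)
    (hKsym : Kt^T = Kt) (hKsq : Kt *m Kt = 1%:M)
    (y1 : R) (hy1 : y1 != 0)
    (a a' : R) (b e b' e' : 'cV[R]_n) (Yt Yt' : 'M[R]_n) :
  (exists Pt : 'M[R]_n, in_O Kt Pt /\ Yt' = Pt *m Yt *m invmx Pt) ->
  special_equiv Kt (blockY Kt a b e Yt) (y1 *: e_first R n)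
                   (blockY Kt a' b' e' Yt') (y1 *: e_first R n).
Proof.
case=> Pt [hO hY].
have Ptu : Pt \in unitmx.
  have : (Kt *m Pt^T *m Kt) *m Pt = 1%:M by rewrite -!mulmxA (mulmxA Pt^T) hO hKsq.
  by case/mulmx1_unit.
pose w := invmx Pt *m e'.
pose P : Vmat R n := mk3 1%:M 0 0 0 Pt 0 0 0 1%:M.
have Pu : P \in unitmx.
  have : P *m mk3 1%:M 0 0 0 (invmx Pt) 0 0 0 1%:M = 1%:M.
    by rewrite /P mul33 one33; simp; rewrite mulmxV.
  by case/mulmx1_unit.
exists P, (col3 (a - a')%:M (Pt *m b - b') 0), (col3 0 (y1^-1 *: (w - e)) 0), 0.
split.
- rewrite /in_O /P bigKE; rewrite !(tr33, mul33); simp; by rewrite hO.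
- by rewrite /P e_lastE mul3c; simp.
- by rewrite /vstar bigKE e_lastE !(tr3c, mulr3, mulrc); simp.
- rewrite -[LHS](mulmxK Pu); congr (_ *m _).
  rewrite /Lop /vstar /P bigKE blockYE e_firstE e_lastE.
  rewrite !(tr33, tr3c, scale3c, mul33, mul3c, mulr3, mulcr, mulrc, add33, add3c, opp33).
  simp.
  have hKP : (invmx Pt)^T *m Kt = Kt *m Pt.
    by rewrite -{1}hO !mulmxA -trmx_mul mulmxV // trmx1 mul1mx.
  have hs : forall (X : 'M[R]_(1, n)), y1 *: 1%:M *m (y1^-1 *: X) = X.
    by move=> X; rewrite -scalemxAl mul1mx scalerA mulfV // scale1r.
  have hs2 : forall (X : 'cV[R]_n), y1^-1 *: X *m (y1 *: 1%:M)^T = X.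
    by move=> X; rewrite linearZ /= tr_scalar_mx -scalemxAr mulmx1 scalerA mulfV // scale1r.
  congr mk3.
  + by rewrite -raddfD /= addrCA subrr addr0.
  + rewrite linearZ /= -!scalemxAl mul1mx scalerA mulfV // scale1r raddfB /= mulmxBl opprB addKr mulNmx.
    by rewrite /w trmx_mul -!mulmxA hKP.
  + by rewrite addrC subrK.
  + by rewrite hY mulmxKV.
  + by rewrite hs2 addrC subrK /w mulKVmx.
  + have -> : - (b'^T *m Kt) - (Pt *m b - b')^T *m Kt = - ((Pt *m b)^T *m Kt).
      by rewrite raddfB /= mulmxBl opprB addKr.
    rewrite mulNmx trmx_mul -!mulmxA (mulmxA Pt^T).
    by rewrite hO.
  + by rewrite -raddfB /= opprB addKr.
- by rewrite scale0r addr0 /P e_firstE scale3c mul3c; simp.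
Qed.

Theorem proposition6 (R : realType) (n : nat) (Kt : 'M[R]_n)
    (hKsym : Kt^T = Kt) (hKsq : Kt *m Kt = 1%:M)
    (y1 : R) (hy1 : y1 != 0)
    (a a' : R) (b e b' e' : 'cV[R]_n) (Yt Yt' : 'M[R]_n)
    (hYt : in_o Kt Yt) (hYt' : in_o Kt Yt') :
  special_equiv Kt (blockY Kt a b e Yt) (y1 *: e_first R n)
                   (blockY Kt a' b' e' Yt') (y1 *: e_first R n)
  <-> exists Pt : 'M[R]_n, in_O Kt Pt /\ Yt' = Pt *m Yt *m invmx Pt.
Proof.
split; [exact: fwd | exact: bwd].
Qed.
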